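(* Let $\underline{s}=(s_1,\dots,s_d)\in\mathbb{R}_+^d$ with $s_{i+1}\le s_i$ for all $i$, and let $\underline{t},\underline{\bar s},\underline{\bar t}\in\mathbb{R}_+^d$ be likewise non-increasingly ordered. Then the pair $(\underline{s},\underline{t})$ equals the pair $(\underline{\bar s},\underline{\bar t})$ up to reordering, i.e. $(\underline s,\underline t)=(\underline{\bar s},\underline{\bar t})$ or $(\underline s,\underline t)=(\underline{\bar t},\underline{\bar s})$, if and only if both of the following hold: 1. $e_i(\underline s)+e_i(\underline t)=e_i(\underline{\bar s})+e_i(\underline{\bar t})$ for all $i=1,\dots,d$; 2. $\sum_{i+j=k,\;0\le i,j\le d}e_i(\underline s)e_j(\underline t)=\sum_{i+j=k,\;0\le i,j\le d}e_i(\underline{\bar s})e_j(\underline{\bar t})$ for all $k=1,\dots,2d$.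
   Context: For a tuple $x=(x_1,\dots,x_n)$, the elementary symmetric polynomial of degree $k$ is $e_k(x)=\sum_{i_1<i_2<\cdots<i_k}x_{i_1}\cdots x_{i_k}$ for $1\le k\le n$, with $e_0(x)=1$ and $e_k(x)=0$ for $k>n$. *)

(* Defs.v *)
From HB Require Import structures.
From mathcomp Require Import all_boot all_order all_algebra.
From mathcomp Require Export reals.
Set Implicit Arguments. Unset Strict Implicit. Unset Printing Implicit Defensive.
Import Order.TTheory GRing.Theory Num.Theory.
Local Open Scope ring_scope.

Definition elem_sym (R : comRingType) (d : nat) (k : nat) (x : {ffun 'I_d -> R}) : R :=
  \sum_(I : {set 'I_d} | #|I| == k) \prod_(i in I) x i.

Definition nonincr_nonneg (R : realType) (d : nat) (x : {ffun 'I_d -> R}) : Prop :=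
  (forall i : 'I_d, 0 <= x i) /\
  (forall i j : 'I_d, val j = (val i).+1 -> x j <= x i).

(* Main.v *)
Require Import Defs.
From HB Require Import structures.
From mathcomp Require Import all_boot all_order all_algebra.
From mathcomp Require Import reals.
From mathcomp Require Import ring zify.
Import Order.TTheory GRing.Theory Num.Theory.
Local Open Scope ring_scope.

Section Aux.
Variable R : comRingType.
Variable d : nat.
Implicit Types x : {ffun 'I_d -> R}.

Lemma es0 x : elem_sym 0 x = 1.
Proof.
rewrite /elem_sym (big_pred1 set0) ?big_set0 // => I /=.
by rewrite cards_eq0.
Qed.

Lemma es_big x k : (d < k)%N -> elem_sym k x = 0.
Proof.
move=> hk; rewrite /elem_sym big1 // => I /eqP hI.
have := max_card I; rewrite card_ord hI => /(leq_trans hk); by rewrite ltnn.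
Qed.

Definition Ep x : {poly R} := \poly_(k < d.+1) elem_sym k x.

Lemma coef_Ep x k : (Ep x)`_k = elem_sym k x.
Proof.
rewrite coef_poly; case: ltnP => // hk; by rewrite es_big.
Qed.

Lemma coef_EpM x y k :
  (Ep x * Ep y)`_k = \sum_(i < d.+1) \sum_(j < d.+1 | (i + j)%N == k) elem_sym i x * elem_sym j y.
Proof.
rewrite /Ep !poly_def mulr_suml coef_sum; apply: eq_bigr => i _.
rewrite mulr_sumr coef_sum [RHS]big_mkcond; apply: eq_bigr => j _ /=.
rewrite -scalerAl -scalerAr scalerA -exprD coefZ coefXn eq_sym.
by case: eqP; rewrite ?mulr1 ?mulr0.
Qed.

Lemma Pexp x :
  \prod_(i < d) ('X + (x i)%:P) = \sum_(k < d.+1) elem_sym k x *: 'X^(d - k).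
Proof.
rewrite (eq_bigr (fun i => (x i)%:P + 'X)); last by move=> i _; rewrite addrC.
rewrite bigA_distr.
rewrite (partition_big (fun J : {set 'I_d} => (inord #|J| : 'I_d.+1)) xpredT) //.
apply: eq_bigr => k _.
rewrite /elem_sym scaler_suml.
have hc : forall J : {set 'I_d}, (#|J| <= d)%N.
  by move=> J; have := max_card J; rewrite card_ord.
rewrite (eq_bigl (fun J : {set 'I_d} => #|J| == k)); last first.
  by move=> J /=; rewrite -val_eqE /= inordK // ltnS hc.
apply: eq_bigr => J /eqP hJ.
rewrite (bigID (mem J)) /=.
rewrite (eq_bigr (fun i => (x i)%:P)); last by move=> i ->.
rewrite [X in _ * X](eq_bigr (fun _ => 'X)); last by move=> i /negbTE ->.
rewrite prodr_const -rmorph_prod mul_polyC; congr (_ *: 'X^_).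
have -> : #|[pred i | ~~ (i \in J)]| = #|~: J|.
  by apply: eq_card => i; rewrite !inE.
by rewrite -hJ (cardsCs J) card_ord subKn // -(card_ord d) -cardsCs max_card.
Qed.

End Aux.
Lemma sorted_neg (R : realType) d (x : {ffun 'I_d -> R}) :
  nonincr_nonneg x -> sorted <=%R [seq - x i | i <- enum 'I_d].
Proof.
move=> [_ hx]; apply/(sortedP 0) => i; rewrite size_map size_enum_ord => hi.
have hi' : (i < d)%N by apply: ltnW.
have e1 : nth 0 [seq - x i | i <- enum 'I_d] i = - x (Ordinal hi').
  rewrite (nth_map (Ordinal hi')) ?size_enum_ord //.
  by rewrite (nth_ord_enum (Ordinal hi') (Ordinal hi')).
have e2 : nth 0 [seq - x i | i <- enum 'I_d] i.+1 = - x (Ordinal hi).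
  rewrite (nth_map (Ordinal hi')) ?size_enum_ord //.
  by rewrite (nth_ord_enum (Ordinal hi') (Ordinal hi)).
rewrite e1 e2 lerN2; exact: hx.
Qed.

Lemma uniq_es (R : realType) d (x y : {ffun 'I_d -> R}) :
  nonincr_nonneg x -> nonincr_nonneg y -> (forall k, elem_sym k x = elem_sym k y) -> x = y.
Proof.
move=> hx hy hk.
have hP : \prod_(z <- [seq - x i | i <- enum 'I_d]) ('X - z%:P)
        = \prod_(z <- [seq - y i | i <- enum 'I_d]) ('X - z%:P).
  rewrite !big_map; change (\prod_(i < d) ('X - (- x i)%:P) = \prod_(i < d) ('X - (- y i)%:P)).
  under eq_bigr do rewrite polyCN opprK.
  under [RHS]eq_bigr do rewrite polyCN opprK.
  rewrite !Pexp; apply: eq_bigr => k _; by rewrite hk.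
have := sorted_eq (@le_trans _ R) (@le_anti _ R) (@sorted_neg R d x hx) (@sorted_neg R d y hy) (prod_XsubC_eq hP).
move/eq_in_map => h; apply/ffunP => i.
by apply: oppr_inj; apply: h; rewrite mem_enum.
Qed.

Theorem theorem10 (R : realType) (d : nat) (s t sb tb : {ffun 'I_d -> R}) :
  nonincr_nonneg s -> nonincr_nonneg t ->
  nonincr_nonneg sb -> nonincr_nonneg tb ->
  (((s = sb /\ t = tb) \/ (s = tb /\ t = sb)) <->
   ((forall i : nat, (0 < i)%N -> (i <= d)%N ->
       elem_sym i s + elem_sym i t = elem_sym i sb + elem_sym i tb) /\
    (forall k : nat, (0 < k)%N -> (k <= 2 * d)%N ->
       \sum_(i < d.+1) \sum_(j < d.+1 | (i + j)%N == k) elem_sym i s * elem_sym j t =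
       \sum_(i < d.+1) \sum_(j < d.+1 | (i + j)%N == k) elem_sym i sb * elem_sym j tb))).
Proof.
move=> hs ht hsb htb; split.
  case=> [[-> ->]|[-> ->]]; split => //.
    by move=> i _ _; rewrite addrC.
  by move=> k _ _; rewrite -!coef_EpM mulrC.
move=> [h1 h2].
have hA : Ep _ _ s + Ep _ _ t = Ep _ _ sb + Ep _ _ tb.
  apply/polyP => k; rewrite !coefD !coef_Ep.
  case: k => [|k]; first by rewrite !es0.
  case: (leqP k.+1 d) => hk; first exact: h1.
  by rewrite !es_big.
have hM : Ep _ _ s * Ep _ _ t = Ep _ _ sb * Ep _ _ tb.
  apply/polyP => k.
  case: k => [|k]; first by rewrite !coef0M !coef_Ep !es0.
  rewrite !coef_EpM.
  case: (leqP k.+1 (2 * d)) => hk; first exact: h2.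
  rewrite !big1 // => i _; rewrite big1 // => j /eqP hij; exfalso;
    have := ltn_ord i; have := ltn_ord j; lia.
have key : (Ep _ _ sb - Ep _ _ s) * (Ep _ _ sb - Ep _ _ t) = 0.
  have -> : (Ep _ _ sb - Ep _ _ s) * (Ep _ _ sb - Ep _ _ t)
      = Ep _ _ sb * Ep _ _ sb - Ep _ _ sb * (Ep _ _ s + Ep _ _ t) + Ep _ _ s * Ep _ _ t by ring.
  rewrite hA hM; ring.
have coefE : forall x y : {ffun 'I_d -> R}, Ep _ _ x = Ep _ _ y -> forall k, elem_sym k x = elem_sym k y.
  by move=> x y e k; rewrite -!coef_Ep e.
move/eqP: key; rewrite mulf_eq0 !subr_eq0 => /orP [/eqP e|/eqP e].
  left; have e' : Ep _ _ t = Ep _ _ tb by apply: (addrI (Ep _ _ s)); rewrite hA e.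
  by split; apply: uniq_es => //; apply: coefE.
right; have e' : Ep _ _ s = Ep _ _ tb by apply: (addIr (Ep _ _ t)); rewrite hA e addrC.
by split; apply: uniq_es => //; apply: coefE.
Qed.
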